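(* Let $T_1\subseteq\mathbb{R}^3$ be the closed triangle with vertices $(0,0,0),(0,-1,0),(-1,-1,0)$ and $T_2$ the closed triangle with vertices $(0,0,0),(-1,-1,0),(-1,-1,-1)$. Let $Y=T_1\cup T_2$ with the relative Euclidean topology $\tau$ and the coordinatewise partial order $\preceq$. Then: (i) $(Y,\tau,\preceq)$ is a locally compact, order-connected partially ordered topological space and $(Y,\preceq)$ is a lattice; (ii) the meet operation $\wedge:Y\times Y\to Y$ is not continuous at $((0,0,0),(0,-1,0))$, so $(Y,\tau,\preceq)$ is not a topological $\wedge$-semilattice; (iii) the canonical map $y\mapsto y^\downarrow$ from $(Y,\tau)$ to $(C^\downarrow(Y),\tau_F)$ is not continuous at $(0,0,0)$.
   Context: A partially ordered topological space is a topological space with a partial order whose graph is closed in the product. $y^\downarrow=\{u\in Y:u\preceq y\}$, $y^\uparrow=\{u\in Y:y\preceq u\}$. Order-connected: $x^\uparrow\cap y^\downarrow$ is connected whenever $x\preceq y$. A topological $\wedge$-semilattice is a partially ordered topological space in which every two elements have an infimum and $\wedge$ is continuous. $C(Y)$ = closed subsets of $Y$, $C^\downarrow(Y)=\{y^\downarrow:y\in Y\}$ with the relative Fell topology; the Fell topology $\tau_F$ is generated by the sets $\{A:A\cap O\neq\emptyset\}$ ($O$ open) and $\{A:A\cap D=\emptyset\}$ ($D$ compact). *)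

(* Defs.v *)
From HB Require Import structures.
From mathcomp Require Import all_boot all_order all_algebra.
From mathcomp Require Import all_classical all_reals all_analysis.
Set Implicit Arguments. Unset Strict Implicit. Unset Printing Implicit Defensive.
Import Order.TTheory GRing.Theory Num.Theory.
Import numFieldNormedType.Exports.
Local Open Scope classical_set_scope.
Local Open Scope ring_scope.

Section Generic.
Context {X : topologicalType} (le : X -> X -> Prop).

Definition is_partial_order :=
  [/\ forall x, le x x,
      forall x y, le x y -> le y x -> x = y &
      forall x y z, le x y -> le y z -> le x z].

Definition pots := is_partial_order /\ closed [set p : X * X | le p.1 p.2].

Definition po_up (x : X) := [set u | le x u].
Definition po_down (y : X) := [set u | le u y].

Definition order_connected :=
  forall x y, le x y -> connected (po_up x `&` po_down y).

Definition po_inf (x y m : X) :=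
  [/\ le m x, le m y & forall z, le z x -> le z y -> le z m].
Definition po_sup (x y s : X) :=
  [/\ le x s, le y s & forall z, le x z -> le y z -> le s z].

Definition is_lattice :=
  forall x y, (exists m, po_inf x y m) /\ (exists s, po_sup x y s).

Definition top_meet_semilattice :=
  pots /\ exists m : X -> X -> X,
    (forall x y, po_inf x y (m x y)) /\ continuous (fun p : X * X => m p.1 p.2).
End Generic.

(* [fell X] is [set X] equipped with the topology generated by the subbase
   {A | A meets O} (O open) and {A | A misses D} (D compact). *)
Definition fell (X : Type) : Type := set X.
HB.instance Definition _ (X : Type) := Choice.on (fell X).

Section FellTop.
Context {X : topologicalType}.
Definition fell_index : pointedType := (set X * bool)%type.
Definition fell_D : set fell_index :=
  fun i => if i.2 then open i.1 else compact i.1.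
Definition fell_b (i : fell_index) : set (fell X) :=
  if i.2 then [set A : fell X | A `&` i.1 !=set0]
  else [set A : fell X | A `&` i.1 = set0].
HB.instance Definition _ :=
  @isSubBaseTopological.Build (fell X) fell_index fell_D fell_b.
End FellTop.

Section Concrete.
Context {R : realType}.
Local Notation pt3 := (R * R * R)%type.
Definition mkpt (a b c : R) : pt3 := (a, b, c).

Definition triangle (u v w : pt3) : set pt3 :=
  [set p | exists a b c : R, [/\ 0 <= a, 0 <= b, 0 <= c, a + b + c = 1 &
     p = mkpt (a * u.1.1 + b * v.1.1 + c * w.1.1)
              (a * u.1.2 + b * v.1.2 + c * w.1.2)
              (a * u.2 + b * v.2 + c * w.2)]].

Definition T1 : set pt3 := triangle (mkpt 0 0 0) (mkpt 0 (-1) 0) (mkpt (-1) (-1) 0).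
Definition T2 : set pt3 := triangle (mkpt 0 0 0) (mkpt (-1) (-1) 0) (mkpt (-1) (-1) (-1)).
Definition Yset : set pt3 := T1 `|` T2.

Definition Ysp : Type := set_type Yset.
HB.instance Definition _ := Topological.copy Ysp (set_type Yset).

Definition le3 (p q : pt3) : Prop := [/\ p.1.1 <= q.1.1, p.1.2 <= q.1.2 & p.2 <= q.2].
Definition leY (x y : Ysp) : Prop := le3 (val x) (val y).
End Concrete.

(* Main.v *)
Require Import Defs.
From HB Require Import structures.
From mathcomp Require Import all_boot all_order all_algebra.
From mathcomp Require Import all_classical all_reals all_analysis.
From mathcomp Require Import ring lra finmap.
Import Order.TTheory GRing.Theory Num.Theory.
Import numFieldNormedType.Exports.
Local Open Scope classical_set_scope.
Local Open Scope ring_scope.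
Set Warnings "-all".

Section M.
Context {R : realType}.
Lemma minP (a b : R) : (Num.min a b = a /\ a <= b) \/ (Num.min a b = b /\ b <= a).
Proof. rewrite minEle; case: leP => h; [left|right]; split => //; lra. Qed.
Lemma maxP (a b : R) : (Num.max a b = b /\ a <= b) \/ (Num.max a b = a /\ b <= a).
Proof. rewrite maxEle; case: leP => h; [left|right]; split => //; lra. Qed.
Definition clamp (a b t : R) := Num.min b (Num.max a t).
Lemma clamp_bd a b t : a <= b -> a <= clamp a b t <= b.
Proof. rewrite /clamp => ab; have [[-> h]|[-> h]] := maxP a t; [have [[-> h']|[-> h']] := minP b t|have [[-> h']|[-> h']] := minP b a]; apply/andP; split; lra. Qed.
Lemma clamp_id a b t : a <= t <= b -> clamp a b t = t.
Proof. rewrite /clamp => /andP [h1 h2]; have [[-> h]|[-> h]] := maxP a t; [have [[-> h']|[-> h']] := minP b t|have [[-> h']|[-> h']] := minP b a]; lra. Qed.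
End M.
Section C.
Context {R : realType} {T : topologicalType}.
Implicit Types f g : T -> R.

Lemma cD f g : continuous f -> continuous g -> continuous (fun t => f t + g t).
Proof. move=> cf cg x. have := (@continuousD R R^o T f g x (cf x) (cg x)). exact. Qed.
Lemma cN f : continuous f -> continuous (fun t => - f t).
Proof. move=> cf x; have := (@continuousN R R^o T f x (cf x)); exact. Qed.
Lemma cM f g : continuous f -> continuous g -> continuous (fun t => f t * g t).
Proof. move=> cf cg x; have := (@continuousM R T f g x (cf x) (cg x)); exact. Qed.
Lemma cmin f g : continuous f -> continuous g -> continuous (fun t => Num.min (f t) (g t)).
Proof. move=> cf cg x; have := (@continuous_min R T f g x (cf x) (cg x)); exact. Qed.
Lemma cmax f g : continuous f -> continuous g -> continuous (fun t => Num.max (f t) (g t)).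
Proof. move=> cf cg x; have := (@continuous_max R T f g x (cf x) (cg x)); exact. Qed.
Lemma cC (c : R) : continuous (fun _ : T => c).
Proof. exact: cst_continuous. Qed.
End C.

Lemma cfst {A B : topologicalType} : continuous (fun p : A * B => p.1).
Proof. by move=> x; apply: cvg_fst. Qed.
Lemma csnd {A B : topologicalType} : continuous (fun p : A * B => p.2).
Proof. by move=> x; apply: cvg_snd. Qed.
Lemma cpair {T A B : topologicalType} (f : T -> A) (g : T -> B) :
  continuous f -> continuous g -> continuous (fun t => (f t, g t)).
Proof. by move=> cf cg x; apply: cvg_pair; [apply: cf|apply: cg]. Qed.
Lemma ccomp {A B C : topologicalType} (f : A -> B) (g : B -> C) :
  continuous f -> continuous g -> continuous (fun t => g (f t)).
Proof. by move=> cf cg x; apply: continuous_comp; [apply: cf|apply: cg]. Qed.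
Section Y.
Context {R : realType}.
Local Notation pt3 := (R * R * R)%type.

Definition C1 (p : pt3) := [/\ p.2 = 0, -1 <= p.1.2, p.1.2 <= p.1.1 & p.1.1 <= 0].
Definition C2 (p : pt3) := [/\ p.1.1 = p.1.2, -1 <= p.1.1, p.1.1 <= p.2 & p.2 <= 0].

Lemma T1E (p : pt3) : T1 p <-> C1 p.
Proof.
case: p => [[x y] z]; split.
  case=> a [b [c [a0 b0 c0 s E]]]; case: E => -> -> ->; rewrite /C1 /=; split; lra.
case=> /= -> h1 h2 h3; exists (1 + y), (x - y), (- x).
split; [lra|lra|lra|lra|]; rewrite /mkpt /=; congr (_, _, _); lra.
Qed.

Lemma T2E (p : pt3) : T2 p <-> C2 p.
Proof.
case: p => [[x y] z]; split.
  case=> a [b [c [a0 b0 c0 s E]]]; case: E => -> -> ->; rewrite /C2 /=; split; lra.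
case=> /= <- h1 h2 h3; exists (1 + x), (z - x), (- z).
split; [lra|lra|lra|lra|]; rewrite /mkpt /=; congr (_, _, _); lra.
Qed.

Lemma YsetE (p : pt3) : Yset p <-> C1 p \/ C2 p.
Proof. by rewrite /Yset; split => -[h|h]; [left; apply/T1E|right; apply/T2E|left; apply/T1E|right; apply/T2E]. Qed.

Definition rx (q : pt3) := clamp (-1) 0 q.1.1.
Definition ry0 (q : pt3) := Num.min (clamp (-1) 0 q.1.2) (rx q).
Definition rd (q : pt3) := rx q - ry0 q.
Definition re (q : pt3) := - clamp (-1) 0 q.2.
Definition rm (q : pt3) := Num.min (rd q) (re q).
Definition rr (q : pt3) : pt3 :=
  mkpt (rx q) (rx q - (rd q - rm q)) (Num.max (rx q) (- (re q - rm q))).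

Lemma rr_in q : Yset (rr q).
Proof.
apply/YsetE; rewrite /rr /rm /rd /re /ry0 /=.
have /andP[hx1 hx2] := @clamp_bd R (-1) 0 q.1.1 ltac:(lra).
have /andP[hy1 hy2] := @clamp_bd R (-1) 0 q.1.2 ltac:(lra).
have /andP[hz1 hz2] := @clamp_bd R (-1) 0 q.2 ltac:(lra).
rewrite -/(rx q) in hx1 hx2 *.
move: (rx q) hx1 hx2 => x hx1 hx2.
move: (clamp (-1) 0 q.1.2) hy1 hy2 => y hy1 hy2.
move: (clamp (-1) 0 q.2) hz1 hz2 => z hz1 hz2.
have [[-> h1]|[-> h1]] := minP y x.
- have [[-> h2]|[-> h2]] := minP (x - y) (- z).
  + have [[-> h3]|[-> h3]] := maxP x (- (- z - (x - y))).
    * by right; rewrite /C2 /=; split; lra.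
    * by right; rewrite /C2 /=; split; lra.
  + have [[-> h3]|[-> h3]] := maxP x (- (- z - - z)).
    * by left; rewrite /C1 /=; split; lra.
    * by left; rewrite /C1 /=; split; lra.
- have [[-> h2]|[-> h2]] := minP (x - x) (- z).
  + have [[-> h3]|[-> h3]] := maxP x (- (- z - (x - x))).
    * by right; rewrite /C2 /=; split; lra.
    * by right; rewrite /C2 /=; split; lra.
  + have [[-> h3]|[-> h3]] := maxP x (- (- z - - z)).
    * by right; rewrite /C2 /=; split; lra.
    * by right; rewrite /C2 /=; split; lra.
Qed.

Lemma rr_id q : Yset q -> rr q = q.
Proof.
case: q => [[x y] z] /YsetE [[/= -> h1 h2 h3]|[/= h1 h2 h3 h4]];
  rewrite /rr /rm /rd /re /ry0 /rx /=.
- rewrite (@clamp_id R (-1) 0 x); last by apply/andP; lra.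
  rewrite (@clamp_id R (-1) 0 y); last by apply/andP; lra.
  rewrite (@clamp_id R (-1) 0 0); last by apply/andP; lra.
  have -> : Num.min y x = y by have [[-> ?]|[-> ?]] := minP y x; lra.
  rewrite oppr0.
  have -> : Num.min (x - y) 0 = 0 by have [[-> ?]|[-> ?]] := minP (x - y) 0; lra.
  have -> : Num.max x (- (0 - 0)) = 0 by have [[-> ?]|[-> ?]] := maxP x (- (0 - 0)); lra.
  rewrite /mkpt; congr (_,_,_); lra.
- subst y.
  rewrite (@clamp_id R (-1) 0 x); last by apply/andP; lra.
  rewrite (@clamp_id R (-1) 0 z); last by apply/andP; lra.
  have -> : Num.min x x = x by have [[-> ?]|[-> ?]] := minP x x; lra.
  rewrite subrr.
  have -> : Num.min 0 (- z) = 0 by have [[-> ?]|[-> ?]] := minP 0 (- z); lra.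
  have -> : Num.max x (- (- z - 0)) = z by have [[-> ?]|[-> ?]] := maxP x (- (- z - 0)); lra.
  rewrite /mkpt; congr (_,_,_); lra.
Qed.
End Y.

Section Z.
Context {R : realType}.
Local Notation pt3 := (R * R * R)%type.

Lemma c11 : continuous (fun q : pt3 => q.1.1).
Proof. exact: (@ccomp _ _ _ (fun q : pt3 => q.1) (fun p : R * R => p.1) cfst cfst). Qed.
Lemma c12 : continuous (fun q : pt3 => q.1.2).
Proof. exact: (@ccomp _ _ _ (fun q : pt3 => q.1) (fun p : R * R => p.2) cfst csnd). Qed.
Lemma c2 : continuous (fun q : pt3 => q.2).
Proof. exact: csnd. Qed.
Lemma cclamp {T : topologicalType} (a b : R) (f : T -> R) :
  continuous f -> continuous (fun t => clamp a b (f t)).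
Proof. by move=> cf; apply: cmin; [apply: cC|apply: cmax; [apply: cC|]]. Qed.

Lemma rr_cont : continuous (@rr R).
Proof.
have crx : continuous (@rx R) by apply: cclamp c11.
have cry : continuous (@ry0 R) by apply: cmin => //; apply: cclamp c12.
have crd : continuous (@rd R) by apply: cD => //; apply: cN.
have cre : continuous (@re R) by apply: cN; apply: cclamp c2.
have crm : continuous (@rm R) by apply: cmin.
rewrite /rr /mkpt; apply: cpair; first apply: cpair => //.
  by apply: cD => //; apply: cN; apply: cD => //; apply: cN.
by apply: cmax => //; apply: cN; apply: cD => //; apply: cN.
Qed.

Definition rY (q : pt3) : @Ysp R := exist _ (rr q) (mem_set (rr_in q)).

Lemma rY_cont : continuous rY.
Proof.
apply: (@continuous_comp_initial _ _ _ (@set_val _ (@Yset R))).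
rewrite set_valE; exact: rr_cont.
Qed.

Lemma val_cont : continuous (fun p : @Ysp R => val p).
Proof. rewrite -set_valE; exact: initial_continuous. Qed.

Lemma rY_val (p : @Ysp R) : rY (val p) = p.
Proof. apply: val_inj; rewrite /= rr_id //; exact: (set_mem (valP p)). Qed.

Lemma Ysp_compact : compact [set: @Ysp R].
Proof.
have -> : [set: @Ysp R] = rY @` ((`[-1, 0]%classic `*` `[-1, 0]%classic) `*` `[-1, 0]%classic).
  apply/seteqP; split => // p _; exists (val p); last exact: rY_val.
  have /YsetE := set_mem (valP p); case: (val p) => [[x y] z] /=.
  case=> [[/= h1 h2 h3 h4]|[/= h1 h2 h3 h4]]; (split; [split|]); rewrite /= in_itv /=; apply/andP; split; lra.
apply: continuous_compact; first exact/continuous_subspaceT/rY_cont.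
by apply: compact_setX; [apply: compact_setX|]; apply: segment_compact.
Qed.

Lemma Ysp_lc : locally_compact [set: @Ysp R].
Proof.
move=> x _; exists setT; last by split; [exact: Ysp_compact|exact: closedT].
exact: filterT.
Qed.

Lemma leY_po : is_partial_order (@leY R).
Proof.
split.
- by move=> x; split.
- move=> x y [h1 h2 h3] [h4 h5 h6]; apply: val_inj.
  move: h1 h2 h3 h4 h5 h6; case: (val x) => [[a b] c]; case: (val y) => [[a' b'] c'] /= *.
  by congr (_,_,_); apply/eqP; rewrite eq_le; apply/andP.
- move=> x y z [h1 h2 h3] [h4 h5 h6]; split; lra.
Qed.


Lemma closed_le_fun {T : topologicalType} (f g : T -> R) :
  continuous f -> continuous g -> closed [set t | f t <= g t].
Proof.
move=> cf cg.
have -> : [set t | f t <= g t] = (fun t => g t - f t) @^-1` [set x | 0 <= x].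
  by apply/seteqP; split => t /=; rewrite subr_ge0.
apply: (proj1 (continuous_closedP _)); last exact: closed_ge.
by apply: cD => //; apply: cN.
Qed.

Lemma leY_closed : closed [set p : @Ysp R * @Ysp R | leY p.1 p.2].
Proof.
have cv1 : continuous (fun p : @Ysp R * @Ysp R => val p.1).
  exact: (@ccomp _ _ _ (fun p : @Ysp R * @Ysp R => p.1) (fun p : @Ysp R => val p) cfst val_cont).
have cv2 : continuous (fun p : @Ysp R * @Ysp R => val p.2).
  exact: (@ccomp _ _ _ (fun p : @Ysp R * @Ysp R => p.2) (fun p : @Ysp R => val p) csnd val_cont).
have -> : [set p : @Ysp R * @Ysp R | leY p.1 p.2] =
   [set p | (val p.1).1.1 <= (val p.2).1.1] `&` [set p | (val p.1).1.2 <= (val p.2).1.2]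
   `&` [set p | (val p.1).2 <= (val p.2).2].
  by apply/seteqP; split => p /=; [case=> ? ? ?|case=> -[? ?] ?].
apply: closedI; first apply: closedI; apply: closed_le_fun.
- exact: (@ccomp _ _ _ _ (fun q : pt3 => q.1.1) cv1 c11).
- exact: (@ccomp _ _ _ _ (fun q : pt3 => q.1.1) cv2 c11).
- exact: (@ccomp _ _ _ _ (fun q : pt3 => q.1.2) cv1 c12).
- exact: (@ccomp _ _ _ _ (fun q : pt3 => q.1.2) cv2 c12).
- exact: (@ccomp _ _ _ _ (fun q : pt3 => q.2) cv1 c2).
- exact: (@ccomp _ _ _ _ (fun q : pt3 => q.2) cv2 c2).
Qed.

Lemma Y_pots : pots (@leY R).
Proof. by split; [exact: leY_po|exact: leY_closed]. Qed.

Definition comb (P Q : pt3) (l : R) : pt3 :=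
  mkpt (P.1.1 + l * (Q.1.1 - P.1.1)) (P.1.2 + l * (Q.1.2 - P.1.2)) (P.2 + l * (Q.2 - P.2)).

Lemma comb_cont (P Q : pt3) : continuous (fun t : R => comb P Q (clamp 0 1 t)).
Proof.
have ci : continuous (fun t : R => t) by move=> x; exact: cvg_id.
have cc : continuous (fun t : R => clamp 0 1 t) by apply: cclamp.
rewrite /comb /mkpt; apply: cpair; first apply: cpair;
  by apply: cD; [apply: cC|apply: cM => //; apply: cC].
Qed.

Lemma comb0 P Q : comb P Q 0 = P.
Proof. by case: P => [[a b] c]; rewrite /comb /mkpt /=; congr (_,_,_); ring. Qed.
Lemma comb1 P Q : comb P Q 1 = Q.
Proof. by case: P Q => [[a b] c] [[a' b'] c']; rewrite /comb /mkpt /=; congr (_,_,_); ring. Qed.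

Lemma star_conn (S : set (@Ysp R)) (c : @Ysp R) : S c ->
  (forall s, S s -> forall l, 0 <= l <= 1 -> S (rY (comb (val c) (val s) l))) ->
  connected S.
Proof.
move=> Sc hS.
pose A := fun s : @Ysp R => (fun t => rY (comb (val c) (val s) (clamp 0 1 t))) @` `[0, 1]%classic.
have -> : S = \bigcup_(s in S) A s.
  apply/seteqP; split => [s Ss|u [s Ss [t t01 <-]]].
    exists s => //; exists 1; first by rewrite /= in_itv /=; apply/andP; lra.
    by rewrite (@clamp_id R 0 1 1) ?comb1 ?rY_val //; apply/andP; lra.
  by apply: hS => //; apply: clamp_bd; lra.
apply: bigcup_connected.
  exists c => s Ss; exists 0; first by rewrite /= in_itv /=; apply/andP; lra.
  by rewrite (@clamp_id R 0 1 0) ?comb0 ?rY_val //; apply/andP; lra.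
move=> s Ss; apply: connected_continuous_connected; first exact: segment_connected.
apply: continuous_subspaceT.
exact: (@ccomp _ _ _ _ (rY) (comb_cont _ _) rY_cont).
Qed.

Lemma cle (a b a' b' l : R) : 0 <= l <= 1 -> a <= b -> a' <= b' ->
  a + l * (a' - a) <= b + l * (b' - b).
Proof. by move=> /andP[l0 l1] h h'; nra. Qed.
Lemma cle_l (c a a' l : R) : 0 <= l <= 1 -> c <= a -> c <= a' -> c <= a + l * (a' - a).
Proof. by move=> hl h h'; have := @cle c a c a' l hl h h'; rewrite subrr mulr0 addr0. Qed.
Lemma cle_r (c a a' l : R) : 0 <= l <= 1 -> a <= c -> a' <= c -> a + l * (a' - a) <= c.
Proof. by move=> hl h h'; have := @cle a c a' c l hl h h'; rewrite subrr mulr0 addr0. Qed.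

Lemma comb_C1 P Q l : 0 <= l <= 1 -> C1 P -> C1 Q -> C1 (comb P Q l).
Proof.
move=> hl [e1 a1 b1 d1] [e2 a2 b2 d2]; rewrite /C1 /comb /=; split.
- by rewrite e1 e2 subrr mulr0 addr0.
- exact: cle_l.
- exact: cle.
- exact: cle_r.
Qed.
Lemma comb_C2 P Q l : 0 <= l <= 1 -> C2 P -> C2 Q -> C2 (comb P Q l).
Proof.
move=> hl [e1 a1 b1 d1] [e2 a2 b2 d2]; rewrite /C2 /comb /=; split.
- by rewrite e1 e2.
- exact: cle_l.
- exact: cle.
- exact: cle_r.
Qed.
Lemma comb_le3l X P Q l : 0 <= l <= 1 -> le3 X P -> le3 X Q -> le3 X (comb P Q l).
Proof. by move=> hl [? ? ?] [? ? ?]; split; apply: cle_l. Qed.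
Lemma comb_le3r X P Q l : 0 <= l <= 1 -> le3 P X -> le3 Q X -> le3 (comb P Q l) X.
Proof. by move=> hl [? ? ?] [? ? ?]; split; apply: cle_r. Qed.

Lemma seg_in (x y c s : @Ysp R) l : 0 <= l <= 1 ->
  (po_up (@leY R) x `&` po_down (@leY R) y) c ->
  (po_up (@leY R) x `&` po_down (@leY R) y) s ->
  (C1 (val c) /\ C1 (val s)) \/ (C2 (val c) /\ C2 (val s)) ->
  (po_up (@leY R) x `&` po_down (@leY R) y) (rY (comb (val c) (val s) l)).
Proof.
move=> hl [xc cy] [xs sy] hC.
have hY : Yset (comb (val c) (val s) l).
  apply/YsetE; case: hC => -[h1 h2]; [left; exact: comb_C1|right; exact: comb_C2].
rewrite /po_up /po_down /leY /= rr_id //; split.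
- exact: comb_le3l.
- exact: comb_le3r.
Qed.

Lemma val_C (p : @Ysp R) : C1 (val p) \/ C2 (val p).
Proof. exact/YsetE/(set_mem (valP p)). Qed.

Lemma Y_oc : order_connected (@leY R).
Proof.
move=> x y hxy.
set S := po_up (@leY R) x `&` po_down (@leY R) y.
suff [c [Sc hc]] : exists c, S c /\ forall s, S s ->
    (C1 (val c) /\ C1 (val s)) \/ (C2 (val c) /\ C2 (val s)).
  apply: (@star_conn S c Sc) => s Ss l hl; apply: seg_in => //; exact: hc.
have [lrefl _ ltrans] := leY_po.
have Sx : S x by split => //; exact: lrefl.
case: (pselect (exists p, S p /\ ~ C1 (val p))) => [[p [Sp nC1]]|hp]; last first.
  exists x; split => // s Ss; left; split.
  - by case: (pselect (C1 (val x))) => // h; exfalso; apply: hp; exists x; split.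
  - by case: (pselect (C1 (val s))) => // h; exfalso; apply: hp; exists s; split.
have C2p : C2 (val p) by case: (val_C p).
case: (pselect (exists q, S q /\ ~ C2 (val q))) => [[q [Sq nC2]]|hq]; last first.
  exists p; split => // s Ss; right; split => //.
  by case: (pselect (C2 (val s))) => // h; exfalso; apply: hq; exists s; split.
have C1q : C1 (val q) by case: (val_C q).
pose cc := mkpt (val p).1.1 (val p).1.2 0.
have cc1 : C1 cc by case: C2p => e a b d; rewrite /C1 /cc /=; split; lra.
have cc2 : C2 cc by case: C2p => e a b d; rewrite /C2 /cc /=; split; lra.
have ccY : Yset cc by apply/YsetE; left.
exists (rY cc); rewrite /= rr_id //; split; last first.
  by move=> s Ss; case: (val_C s) => h; [left|right].
case: Sp => -[px1 px2 px3] [py1 py2 py3]; case: Sq => _ [qy1 qy2 qy3].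
case: C1q => qe _ _ _; case: C2p => _ _ pz1 pz2.
rewrite /S /po_up /po_down /leY /= rr_id //; split; split => //=; lra.
Qed.

Lemma minle (a b : R) : Num.min a b <= a /\ Num.min a b <= b.
Proof. by have [[-> ?]|[-> ?]] := minP a b; split; lra. Qed.
Lemma lemin (z a b : R) : z <= a -> z <= b -> z <= Num.min a b.
Proof. by have [[-> ?]|[-> ?]] := minP a b. Qed.
Lemma maxge (a b : R) : a <= Num.max a b /\ b <= Num.max a b.
Proof. by have [[-> ?]|[-> ?]] := maxP a b; split; lra. Qed.
Lemma gemax (z a b : R) : a <= z -> b <= z -> Num.max a b <= z.
Proof. by have [[-> ?]|[-> ?]] := maxP a b. Qed.

Lemma Yfacts (p : pt3) : C1 p \/ C2 p ->
  [/\ -1 <= p.1.2, p.1.2 <= p.1.1, p.1.1 <= 0, p.2 <= 0 &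
      (p.2 < 0 -> p.1.1 = p.1.2 /\ p.1.1 <= p.2)].
Proof. by case=> -[h1 h2 h3 h4]; split => //; try lra; move=> h; split => //; lra. Qed.

Lemma Y_meet (x y : @Ysp R) : exists m, po_inf (@leY R) x y m.
Proof.
rewrite /po_inf /leY.
move: (val_C x) (val_C y); case: (val x) => [[a b] c]; case: (val y) => [[a' b'] c'].
move=> /Yfacts [/= x1 x2 x3 x4 x5] /Yfacts [/= y1 y2 y3 y4 y5].
have [m1 m2] := minle a a'; have [m3 m4] := minle b b'; have [m5 m6] := minle c c'.
case: (ltrP (Num.min c c') 0) => hc.
- pose mq := mkpt (Num.min b b') (Num.min b b') (Num.min c c').
  have mY : Yset mq.
    apply/YsetE; right; rewrite /C2 /mq /=; split => //.
    + by apply: lemin; lra.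
    + have [[e ?]|[e ?]] := minP c c'; rewrite e in hc *.
      * by have [? ?] := x5 hc; lra.
      * by have [? ?] := y5 hc; lra.
    + by lra.
  exists (rY mq); rewrite /= rr_id //; split.
  + by rewrite /le3 /mq /=; split; lra.
  + by rewrite /le3 /mq /=; split; lra.
  + move=> [[[u v] w] zin] /= [h1 h2 h3] [h4 h5 h6]; simpl in h1, h2, h3, h4, h5, h6.
    have /YsetE/Yfacts [/= z1 z2 z3 z4 z5] := set_mem zin.
    have hw : w <= Num.min c c' by apply: lemin.
    have [e _] := z5 (le_lt_trans hw hc).
    rewrite /le3 /mq /=; split; apply: lemin; lra.
- have c0 : c = 0 by lra.
  have c0' : c' = 0 by lra.
  subst c c'.
  pose mq := mkpt (Num.min a a') (Num.min b b') 0.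
  have mY : Yset mq.
    apply/YsetE; left; rewrite /C1 /mq /=; split => //.
    + by apply: lemin; lra.
    + by apply: lemin; lra.
    + by lra.
  exists (rY mq); rewrite /= rr_id //; split.
  + by rewrite /le3 /mq /=; split; lra.
  + by rewrite /le3 /mq /=; split; lra.
  + move=> [[[u v] w] zin] /= [h1 h2 h3] [h4 h5 h6]; simpl in h1, h2, h3, h4, h5, h6.
    by rewrite /le3 /mq /=; split => //; apply: lemin.
Qed.

Lemma Y_join (x y : @Ysp R) : exists s, po_sup (@leY R) x y s.
Proof.
rewrite /po_sup /leY.
move: (val_C x) (val_C y); case: (val x) => [[a b] c]; case: (val y) => [[a' b'] c'].
move=> /Yfacts [/= x1 x2 x3 x4 x5] /Yfacts [/= y1 y2 y3 y4 y5].
have [m1 m2] := maxge a a'; have [m3 m4] := maxge b b'; have [m5 m6] := maxge c c'.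
pose mq := mkpt (Num.max a a') (Num.max b b') (Num.max c c').
have mY : Yset mq.
  apply/YsetE; rewrite /C1 /C2 /mq /=.
  case: (ltrP (Num.max c c') 0) => hc.
  - have [e1 e2] := x5 (le_lt_trans m5 hc).
    have [e3 e4] := y5 (le_lt_trans m6 hc).
    right; rewrite -e1 -e3; split => //.
    + by lra.
    + by apply: gemax; lra.
    + by apply: gemax.
  - left; split.
    + by have := @gemax 0 c c' x4 y4; lra.
    + by lra.
    + by apply: gemax; lra.
    + by apply: gemax.
exists (rY mq); rewrite /= rr_id //; split.
+ by rewrite /le3 /mq /=; split; lra.
+ by rewrite /le3 /mq /=; split; lra.
+ move=> [[[u v] w] zin] /= [h1 h2 h3] [h4 h5 h6]; simpl in h1, h2, h3, h4, h5, h6.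
  by rewrite /le3 /mq /=; split; apply: gemax.
Qed.

Lemma Y_lattice : is_lattice (@leY R).
Proof. by move=> x y; split; [exact: Y_meet|exact: Y_join]. Qed.
End Z.

Section W.
Context {R : realType}.
Local Notation pt3 := (R * R * R)%type.

Lemma nbhs0_pos (U : set R) : nbhs (0:R) U -> exists t : R, 0 < t <= 1 /\ U t.
Proof.
move=> /nbhs_ballP [e /= e0 he]; exists (Num.min (e / 2) 1); split.
  by have [[-> ?]|[-> ?]] := minP (e / 2) 1; apply/andP; split; lra.
apply: he; rewrite /ball /= sub0r normrN ger0_norm.
  by have [[-> ?]|[-> ?]] := minP (e / 2) 1; lra.
by have [[-> ?]|[-> ?]] := minP (e / 2) 1; lra.
Qed.

Definition OO : set (@Ysp R) := [set p | 1 / 2 < (val p).1.1 - (val p).1.2].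

Lemma OO_open : open OO.
Proof.
have cf : continuous (fun p : @Ysp R => (val p).1.1 - (val p).1.2).
  apply: cD; last apply: cN.
  - exact: (@ccomp _ _ _ _ (fun q : pt3 => q.1.1) val_cont c11).
  - exact: (@ccomp _ _ _ _ (fun q : pt3 => q.1.2) val_cont c12).
have -> : OO = (fun p : @Ysp R => (val p).1.1 - (val p).1.2) @^-1` [set x | 1 / 2 < x] by [].
by apply: open_comp => [x _|]; [apply: cf|apply: open_gt].
Qed.


Lemma fell_open_meet (O : set (@Ysp R)) : open O ->
  @open (fell (@Ysp R)) [set A : fell (@Ysp R) | A `&` O !=set0].
Proof.
move=> oO.
exists [set [set A : fell (@Ysp R) | A `&` O !=set0]]; last by rewrite bigcup_set1.
move=> _ ->; exists (fset1 ((O, true) : @fell_index (@Ysp R))).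
  by move=> i /=; rewrite inE => /eqP ->; apply/mem_set.
by rewrite set_fset1 bigcap_set1.
Qed.

Definition gam (t : R) : @Ysp R :=
  rY (mkpt (- clamp 0 1 t) (- clamp 0 1 t) (- clamp 0 1 t)).

Lemma gam_cont : continuous gam.
Proof.
have cc : continuous (fun t : R => - clamp 0 1 t).
  by apply: cN; apply: cclamp => x; exact: cvg_id.
apply: (@ccomp _ _ _ (fun t : R => mkpt (- clamp 0 1 t) (- clamp 0 1 t) (- clamp 0 1 t)) rY);
  last exact: rY_cont.
by rewrite /mkpt; apply: cpair => //; apply: cpair.
Qed.

Lemma gam0 (o : @Ysp R) : val o = mkpt 0 0 0 -> gam 0 = o.
Proof.
move=> ho; apply: val_inj; rewrite ho /gam /= (@clamp_id R 0 1 0); last by apply/andP; lra.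
rewrite oppr0 rr_id //; apply/YsetE; right; rewrite /C2 /=; split; lra.
Qed.

Lemma gam_val t : 0 < t <= 1 -> val (gam t) = mkpt (- t) (- t) (- t).
Proof.
move=> ht; rewrite /gam /= (@clamp_id R 0 1 t); last by case/andP: ht => *; apply/andP; lra.
rewrite rr_id //; apply/YsetE; right; case/andP: ht => *; rewrite /C2 /=; split; lra.
Qed.

Lemma below_gam (q : @Ysp R) t : 0 < t <= 1 -> leY q (gam t) -> ~ OO q.
Proof.
move=> ht; rewrite /leY gam_val // /OO /=.
have /Yfacts [_ _ _ _ h5] := val_C q.
case/andP: ht => t0 t1 [_ _ h3]; simpl in h3.
have [-> _] := h5 ltac:(lra); lra.
Qed.

Lemma part_ii (o a : @Ysp R) (ho : val o = mkpt 0 0 0) (ha : val a = mkpt 0 (-1) 0)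
  (m : @Ysp R -> @Ysp R -> @Ysp R) :
  (forall x y, po_inf (@leY R) x y (m x y)) ->
  ~ {for (o, a), continuous (fun p : @Ysp R * @Ysp R => m p.1 p.2)}.
Proof.
move=> hm hc.
have [lrefl lanti ltrans] := leY_po (R := R).
have ao : leY a o by rewrite /leY ha ho /le3 /=; split; lra.
have moa : m o a = a.
  have [h1 h2 h3] := hm o a.
  by apply: lanti => //; apply: h3.
have Oa : OO a by rewrite /OO /= ha /=; lra.
have N1 : nbhs (o, a) ((fun p : @Ysp R * @Ysp R => m p.1 p.2) @^-1` OO).
  apply: hc; rewrite /= moa; apply: open_nbhs_nbhs; split => //; exact: OO_open.
have ch : {for 0, continuous (fun t : R => (gam t, a))}.
  by apply: cpair; [exact: gam_cont|exact: cst_continuous].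
have N2 : nbhs (0:R) [set t | OO (m (gam t) a)].
  by apply: (ch [set p | OO (m p.1 p.2)]); rewrite /= (gam0 o ho); exact: N1.
have [t [ht Ot]] := nbhs0_pos _ N2.
apply: (below_gam _ _ ht _ Ot).
by have [] := hm (gam t) a.
Qed.

Lemma part_iii (o a : @Ysp R) (ho : val o = mkpt 0 0 0) (ha : val a = mkpt 0 (-1) 0) :
  ~ {for o, continuous (fun y : @Ysp R => (po_down (@leY R) y : fell (@Ysp R)))}.
Proof.
move=> hc.
have ao : leY a o by rewrite /leY ha ho /le3 /=; split; lra.
have Oa : OO a by rewrite /OO /= ha /=; lra.
have N1 : nbhs o [set y | (po_down (@leY R) y `&` OO) !=set0].
  apply: (hc [set A : fell (@Ysp R) | A `&` OO !=set0]).
  apply: open_nbhs_nbhs; split; first exact: (fell_open_meet _ OO_open).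
  by exists a.
have N2 : nbhs (0:R) [set t | (po_down (@leY R) (gam t) `&` OO) !=set0].
  by apply: (gam_cont 0 [set y | (po_down (@leY R) y `&` OO) !=set0]); rewrite (gam0 o ho); exact: N1.
have [t [ht [q [hq Oq]]]] := nbhs0_pos _ N2.
exact: (below_gam _ _ ht hq Oq).
Qed.
End W.

Theorem mainTheorem8 (R : realType) (o a : @Ysp R)
  (ho : val o = mkpt 0 0 0) (ha : val a = mkpt 0 (-1) 0) :
  (* (i) *)
  [/\ locally_compact [set: @Ysp R], pots (@leY R), order_connected (@leY R)
    & is_lattice (@leY R)] /\
  (* (ii) *)
  (forall m : Ysp -> Ysp -> Ysp, (forall x y, po_inf (@leY R) x y (m x y)) ->
     ~ {for (o, a), continuous (fun p : Ysp * Ysp => m p.1 p.2)}) /\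
  ~ top_meet_semilattice (@leY R) /\
  (* (iii) *)
  ~ {for o, continuous (fun y : Ysp => (po_down (@leY R) y : fell (@Ysp R)))}.

Proof.
split; first split.
- exact: Ysp_lc.
- exact: Y_pots.
- exact: Y_oc.
- exact: Y_lattice.
split; first by move=> m hm; exact: (part_ii _ _ ho ha m hm).
split.
- by move=> [_ [m [hm hc]]]; apply: (part_ii _ _ ho ha m hm); exact: hc.
- exact: (part_iii _ _ ho ha).
Qed.
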